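(* Let $m\in\mathbb{N}$ and let $G$ be a bipartite graph with parts $X$ and $Y$, where $Y\neq\emptyset$, such that $|X|\geq |Y|+2m$ and every vertex in $Y$ has degree at least $|X|-m$. Then $G$ contains a collection of at most $\lfloor |X|/|Y|\rfloor$ paths whose union covers all vertices of $Y$ and all but $|Y|+2m$ vertices of $X$.
   Context: Paths may have length zero and need not be vertex-disjoint. *)

(* Defs.v *)
From mathcomp Require Import all_boot.
Set Implicit Arguments. Unset Strict Implicit. Unset Printing Implicit Defensive.

Definition simple_graph (T : finType) (e : rel T) : Prop :=
  irreflexive e /\ symmetric e.

Definition bipartite_with (T : finType) (e : rel T) (X Y : {set T}) : Prop :=
  [/\ [disjoint X & Y], X :|: Y = [set: T] &
      forall u v, e u v -> (u \in X) && (v \in Y) || (u \in Y) && (v \in X)].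

Definition deg (T : finType) (e : rel T) (v : T) : nat := #|[set u | e v u]|.

(* A path in the graph: a nonempty sequence of pairwise distinct vertices,
   consecutive ones adjacent.  A single vertex is a path of length zero. *)
Definition gpath (T : finType) (e : rel T) (s : seq T) : bool :=
  [&& s != [::], uniq s & sorted e s].

Definition covered (T : finType) (P : seq (seq T)) (v : T) : bool :=
  has (fun s => v \in s) P.

(* Main.v *)
Require Import Defs.
From mathcomp Require Import all_boot.
From mathcomp Require Import zify.

Lemma cardU_le {T : finType} (A B : {set T}) : #|A :|: B| <= #|A| + #|B|.
Proof. exact: (leq_card_setU A B).1. Qed.


Lemma ar0 a x m : x - m <= a -> x - a <= m. Proof. lia. Qed.
Lemma ar1 a u m : u <= a + m -> 1 + 2 * m <= u -> 0 < a. Proof. lia. Qed.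
Lemma ar2 a s m u : u <= a + s.+1 + m + m -> s.+2 + 2 * m <= u -> 0 < a. Proof. lia. Qed.
Lemma ar2' s m u : (s.+1).+1 + 2 * m <= u -> s.+1 + 2 * m <= u. Proof. lia. Qed.
Lemma ar3 u k m : u <= 0 -> 0 < k -> u < k + 2 * m. Proof. lia. Qed.
Lemma ar4 a u k N : a + k <= u -> u <= N.+1 -> 0 < k -> a <= N. Proof. lia. Qed.
Lemma ar5 a u k d : a + k <= u -> d <= a -> k + d <= u. Proof. lia. Qed.

Lemma nonN (T : finType) (e : rel T) (X Y : {set T}) (m : nat) :
  bipartite_with e X Y ->
  (forall y, y \in Y -> #|X| - m <= deg e y) ->
  forall y, y \in Y -> #|X :\: [set u | e y u]| <= m.
Proof.
move=> [dXY _ hb] hdeg y yY.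
have sub : [set u | e y u] \subset X.
  apply/subsetP => u; rewrite inE => /hb.
  by rewrite (disjointFl dXY yY) /= => /andP[].
rewrite cardsDS //.
exact: ar0 (hdeg y yY).
Qed.

Lemma buildL (T : finType) (e : rel T) (X Y : {set T}) (m : nat) (U : {set T}) :
  simple_graph e -> bipartite_with e X Y ->
  (forall y, y \in Y -> #|X| - m <= deg e y) ->
  U \subset X ->
  forall ys y0, uniq ys -> {subset ys <= Y} -> y0 \in Y ->
  (size ys).+1 + 2 * m <= #|U| ->
  exists h t, [/\ h \in U, e y0 h, uniq (h :: t) & path e h t] /\ [/\
     (forall z, z \in h :: t -> (z \in ys) || (z \in U)),
     {subset ys <= h :: t} &
     #|[set z in U | z \in h :: t]| = (size ys).+1].
Proof.
move=> [irr sym] bip hdeg sUX.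
have [dXY _ _] := bip.
have nN := @nonN _ _ _ _ _ bip hdeg.
elim=> [|y ys IH] y0 /= Hu Hsub Hy0 Hc.
  pose C := [set z in U | e y0 z]. have defC : C = [set z in U | e y0 z] by []. clearbody C.
  have : #|U| <= #|C| + m.
    apply: (@leq_trans #|C :|: (X :\: [set u | e y0 u])|).
      apply: subset_leq_card; apply/subsetP => z zU.
      rewrite defC !inE zU (subsetP sUX z zU) /=; by case: (e y0 z).
    rewrite (leq_trans (cardU_le _ _)) // leq_add2l; exact: nN.
  move=> hC.
  have : 0 < #|C| by exact: ar1 hC Hc.
  case/card_gt0P => h; rewrite defC inE => /andP[hU ey0h].
  exists h, [::]; split; split => //.
  - by move=> z; rewrite inE => /eqP ->; rewrite hU.
  - have -> : [set z in U | z \in [:: h]] = [set h].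
      by apply/setP => z; rewrite !inE; case: (eqVneq z h) => [->|]; rewrite ?hU ?andbF.
    by rewrite cards1.
move/andP: Hu => [yys Hu].
have yY : y \in Y by apply: Hsub; rewrite inE eqxx.
have Hsub' : {subset ys <= Y} by move=> z zs; apply: Hsub; rewrite inE zs orbT.
have [|h [t [[hU eyh Hut Hpt] [Hmem Hys Hcnt]]]] := IH y Hu Hsub' yY; first exact: ar2' Hc.
pose C := [set z in U | e y z && e y0 z && (z \notin h :: t)]. have defC : C = [set z in U | e y z && e y0 z && (z \notin h :: t)] by []. clearbody C.
have : #|U| <= #|C| + (size ys).+1 + m + m.
  apply: (@leq_trans #|((C :|: [set z in U | z \in h :: t]) :|:
          (X :\: [set u | e y u])) :|: (X :\: [set u | e y0 u])|).
    apply: subset_leq_card; apply/subsetP => z zU.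
    rewrite defC !inE zU (subsetP sUX z zU) /=.
    by case: (e y z); case: (e y0 z); case: (z == h); case: (z \in t).
  apply: (leq_trans (cardU_le _ _)); apply: leq_add; last exact: nN.
  apply: (leq_trans (cardU_le _ _)); apply: leq_add; last exact: nN.
  by apply: (leq_trans (cardU_le _ _)); rewrite Hcnt.
move=> hC.
have : 0 < #|C| by exact: ar2 hC Hc.
case/card_gt0P => x; rewrite defC !inE => /andP[xU /andP[/andP[eyx ey0x] xnot]].
have xX : x \in X := subsetP sUX x xU.
have yU : y \notin U.
  apply/negP => /(subsetP sUX) yX; by rewrite (disjointFl dXY yY) in yX.
have ynot : y \notin h :: t.
  apply/negP => /Hmem /orP[]; [by rewrite (negbTE yys) | by rewrite (negbTE yU)].
exists x, (y :: h :: t); split; split => //.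
- rewrite /= -/(h :: t).
  rewrite inE negb_or xnot andbT.
  have -> : (x == y) = false.
    by apply/negP => /eqP xy; rewrite xy (disjointFl dXY yY) in xX.
  by rewrite ynot -[(h \notin t) && _]/(uniq (h :: t)) Hut.
- by rewrite /= (sym x y) eyx eyh Hpt.
- move=> z; rewrite !inE => /orP[/eqP ->|/orP[/eqP ->|zin]].
  + by rewrite xU orbT.
  + by rewrite eqxx.
  + by case/orP: (Hmem z zin) => -> //; rewrite !orbT.
- move=> z; rewrite inE => /orP[/eqP ->|zs]; first by rewrite !inE eqxx orbT.
  by rewrite !inE; have := Hys z zs; rewrite inE => ->; rewrite !orbT.
- have -> : [set z in U | z \in [:: x, y, h & t]] = x |: [set z in U | z \in h :: t].
    apply/setP => z; rewrite !inE.
    case: (eqVneq z x) => [->|_]; first by rewrite xU.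
    case: (eqVneq z y) => [->|_] /=; first by rewrite (negbTE yU).
    done.
  rewrite cardsU1 Hcnt inE xU /=.
  by move: xnot; rewrite inE => ->.
Qed.

Lemma claim (T : finType) (e : rel T) (X Y : {set T}) (m : nat) :
  simple_graph e -> bipartite_with e X Y ->
  (forall y, y \in Y -> #|X| - m <= deg e y) ->
  Y != set0 ->
  forall N (U : {set T}), #|U| <= N -> U \subset X ->
  exists P : seq (seq T),
    [/\ all (gpath e) P,
        (forall s, s \in P -> forall y, y \in Y -> y \in s),
        size P * #|Y| <= #|U| &
        #|[set x in U | ~~ covered P x]| <= #|Y| + 2 * m]
    /\ (#|Y| + 2 * m <= #|U| -> P != [::]).
Proof.
move=> sg bip hdeg Yn0.
have [dXY _ _] := bip.
have kpos : 0 < #|Y| by rewrite card_gt0.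
have base : forall U : {set T}, #|U| < #|Y| + 2 * m ->
  exists P : seq (seq T),
    [/\ all (gpath e) P,
        (forall s, s \in P -> forall y, y \in Y -> y \in s),
        size P * #|Y| <= #|U| &
        #|[set x in U | ~~ covered P x]| <= #|Y| + 2 * m]
    /\ (#|Y| + 2 * m <= #|U| -> P != [::]).
  move=> U lt; exists [::]; split; last by rewrite leqNgt lt.
  split => //.
  apply: (@leq_trans #|U|); last exact: ltnW.
  by apply: subset_leq_card; apply/subsetP => x; rewrite inE => /andP[].
elim=> [|N IH] U hUN sUX.
  by apply: base; exact: ar3 hUN kpos.
case: (boolP (#|U| < #|Y| + 2 * m)) => [lt|]; first exact: (base U).
rewrite -leqNgt => ge.
have cY : #|Y| = size (enum Y) by rewrite cardE.
have uY : uniq (enum Y) := enum_uniq _.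
case EY : (enum Y) cY uY => [|y1 ys] cY uY; first by move: kpos; rewrite cY.
move: uY => /= /andP[y1ys uys].
have y1Y : y1 \in Y by rewrite -mem_enum EY inE eqxx.
have ysY : {subset ys <= Y} by move=> z zs; rewrite -mem_enum EY inE zs orbT.
have [|h [t [[hU ey1h Hut Hpt] [Hmem Hys Hcnt]]]] :=
  @buildL _ _ _ _ _ _ sg bip hdeg sUX ys y1 uys ysY y1Y.
  by move: ge; rewrite cY /=.
have y1U : y1 \notin U.
  apply/negP => /(subsetP sUX) y1X; by rewrite (disjointFl dXY y1Y) in y1X.
pose s := y1 :: h :: t.
pose U' := [set x in U | x \notin s].
have hU' : #|U'| + #|Y| <= #|U|.
  rewrite cY /= -Hcnt.
  have dj : [disjoint U' & [set z in U | z \in h :: t]].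
    rewrite disjoint_subset; apply/subsetP => z; rewrite !inE => /andP[_ zs].
    apply/negP => /andP[_ zht].
    by move: zs; rewrite negb_or zht andbF.
  have := (leq_card_setU U' [set z in U | z \in h :: t]).2.
  rewrite dj => /eqP <-.
  apply: subset_leq_card; apply/subsetP => z.
  by rewrite !inE => /orP[/andP[->]|/andP[->]].
have hN : #|U'| <= N.
  exact: ar4 hU' hUN kpos.
have sU' : U' \subset X.
  by apply/subsetP => z; rewrite inE => /andP[/(subsetP sUX)].
have [P' [[Pg Pc Ps Pu] _]] := IH U' hN sU'.
exists (s :: P'); split; last by [].
split.
- rewrite /= Pg andbT /gpath /= ey1h Hpt andbT.
  rewrite -[(h \notin t) && _]/(uniq (h :: t)) Hut andbT.
  rewrite andbT; apply/negP => /Hmem /orP[]; [by rewrite (negbTE y1ys) | by rewrite (negbTE y1U)].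
- move=> s0; rewrite inE => /orP[/eqP ->|s0P]; last exact: Pc.
  move=> y; rewrite -mem_enum EY inE => /orP[/eqP ->|yys]; first by rewrite inE eqxx.
  by rewrite inE (Hys y yys) orbT.
- rewrite /= mulSn.
  exact: ar5 hU' Ps.
- apply: leq_trans Pu.
  apply: subset_leq_card; apply/subsetP => x.
  rewrite !inE /covered /= negb_or => /andP[xU /andP[xs xc]].
  by rewrite xU xs xc.
Qed.

Theorem lemma2p3 (T : finType) (e : rel T) (X Y : {set T}) (m : nat) :
  simple_graph e ->
  bipartite_with e X Y ->
  Y != set0 ->
  #|Y| + 2 * m <= #|X| ->
  (forall y, y \in Y -> #|X| - m <= deg e y) ->
  exists P : seq (seq T),
    [/\ size P <= #|X| %/ #|Y|,
        all (gpath e) P,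
        (forall y, y \in Y -> covered P y) &
        #|[set x in X | ~~ covered P x]| <= #|Y| + 2 * m].
Proof.
move=> sg bip Yn0 hX hdeg.
have [P [[Pg Pc Ps Pu] Pn]] := @claim _ _ _ _ _ sg bip hdeg Yn0 #|X| X (leqnn _) (subxx _).
exists P; split => //.
- by rewrite leq_divRL // card_gt0.
- move=> y yY; case: P Pg Pc Ps Pu Pn => [|s P'] _ Pc _ _ Pn.
    by have := Pn hX.
  by rewrite /covered /= (Pc s (mem_head _ _) y yY).
Qed.
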